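(* Let $H$ be a $k$-linear semi-Hopf category, $A$ a right $H$-comodule category and $B=A^{{\rm co}H}$. For a descent datum $(M,\sigma)\in\underline{\rm Desc}_B(A)$ define $\rho_{xy}:M_{xy}\to M_{xy}\otimes H_{xy}$ by $\rho_{xy}(m)=m_{<0>}m_{<1>[0]}\otimes m_{<1>[1]}$. Then $(M,\rho)$ is a right relative $(A,H)$-Hopf module, every morphism of descent data is a morphism of relative Hopf modules, and so $P(M,\sigma)=(M,\rho)$, $P(f)=f$ defines a functor $P:\underline{\rm Desc}_B(A)\to\mathcal{M}_k(X)^H_A$. If moreover $H$ is a Hopf category and $A$ is an $H$-Galois category extension of $B$, then $P$ is an isomorphism of categories.
   Context: Let $k$ be a commutative ring; unadorned $\otimes$ is over $k$. A $k$-linear category $A$ with class of objects $X$ consists of $k$-modules $A_{xy}$, associative compositions $A_{xy}\otimes A_{yz}\to A_{xz}$, $a\otimes b\mapsto ab$, and units $1_x\in A_{xx}$. A right $A$-module is a family $(M_{xy})$ with maps $M_{xy}\otimes A_{yz}\to M_{xz}$, $m\otimes a\mapsto ma$, associative and unital. A $k$-linear semi-Hopf category $H$ (objects $X$) is a $k$-linear category in which each $H_{xy}$ is a $k$-coalgebra with $\Delta_{xy}(h)=h_{(1)}\otimes h_{(2)}$ and counit $\varepsilon_{xy}$, such that $\Delta_{xz}(hh')=h_{(1)}h'_{(1)}\otimes h_{(2)}h'_{(2)}$, $\Delta_{xx}(1_x)=1_x\otimes1_x$, $\varepsilon_{xz}(hh')=\varepsilon_{xy}(h)\varepsilon_{yz}(h')$,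 $\varepsilon_{xx}(1_x)=1$. It is a Hopf category if there are $k$-linear maps $S_{xy}:H_{xy}\to H_{yx}$ with $h_{(1)}S_{xy}(h_{(2)})=\varepsilon_{xy}(h)1_x$ and $S_{xy}(h_{(1)})h_{(2)}=\varepsilon_{xy}(h)1_y$. A right $H$-comodule category is a $k$-linear category $A$ with objects $X$ such that each $A_{xy}$ is a right $H_{xy}$-comodule, $\rho_{xy}(a)=a_{[0]}\otimes a_{[1]}$, with $\rho_{xz}(ab)=a_{[0]}b_{[0]}\otimes a_{[1]}b_{[1]}$ and $\rho_{xx}(1_x)=1_x\otimes1_x$. Its coinvariants are the $k$-algebras $B_x=\{a\in A_{xx}\mid\rho_{xx}(a)=a\otimes1_x\}$; $A_{xy}$ is a $B_x$-$B_y$-bimodule by multiplication. $A$ is an $H$-Galois category extension of $B$ if all maps ${\rm can}^z_{xy}:A_{zx}\otimes_{B_x}A_{xy}\to A_{zy}\otimes H_{xy}$, $a\otimes_{B_x}a'\mapsto aa'_{[0]}\otimes a'_{[1]}$, are bijective. A right relative $(A,H)$-Hopf module is a right $A$-module $M$ such that each $M_{xy}$ is a right $H_{xy}$-comodule with $\rho_{xz}(ma)=m_{[0]}a_{[0]}\otimes m_{[1]}a_{[1]}$; morphisms are $A$-linear maps with $H_{xy}$-colinear components; the category is $\mathcal{M}_k(X)^H_A$. A descent datum $(M,\sigma)$ is a right $A$-module $M$ with $k$-linear maps $\sigma_{xy}:M_{xy}\to M_{xx}\otimes_{B_x}A_{xy}$, $\sigma_{xy}(m)=m_{<0>}\otimes_{B_x}m_{<1>}$,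 such that for all $m\in M_{xy}$, $a\in A_{yz}$: (i) $\sigma_{xz}(ma)=m_{<0>}\otimes_{B_x}m_{<1>}a$; (ii) $\sigma_{xx}(m_{<0>})\otimes_{B_x}m_{<1>}=m_{<0>}\otimes_{B_x}1_x\otimes_{B_x}m_{<1>}$; (iii) $m_{<0>}m_{<1>}=m$. A morphism of descent data is a morphism $f$ of right $A$-modules with $f_{xx}(m_{<0>})\otimes_{B_x}m_{<1>}=\sigma'_{xy}(f_{xy}(m))$. $\underline{\rm Desc}_B(A)$ is the category of descent data. *)

(* Defs.v *)
From HB Require Import structures.
From mathcomp Require Import all_boot all_order all_algebra.
Set Implicit Arguments. Unset Strict Implicit. Unset Printing Implicit Defensive.
Import GRing.Theory.
Local Open Scope ring_scope.

(* Tensor products, presented as formal sums of pure tensors modulo the     *)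
(* congruence generated by the defining relations of the tensor product.    *)
(* An element of M (x)_B N is represented by a list [:: (m1,n1); ...] of    *)
(* pure tensors standing for m1 (x) n1 + ...; two lists represent the same  *)
(* element iff they are related by [fs_eq gen].                             *)

Section FormalSums.
Variable T : Type.
Variable gen : seq T -> seq T -> Prop.
(* smallest congruence on the free commutative monoid seq T containing gen *)
Inductive fs_eq : seq T -> seq T -> Prop :=
| fs_gen s t : gen s t -> fs_eq s t
| fs_refl s : fs_eq s s
| fs_sym s t : fs_eq s t -> fs_eq t s
| fs_trans s t u : fs_eq s t -> fs_eq t u -> fs_eq s u
| fs_cat s s' t t' : fs_eq s s' -> fs_eq t t' -> fs_eq (s ++ t) (s' ++ t')
| fs_swap s t : fs_eq (s ++ t) (t ++ s).
End FormalSums.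

Section Tensor2.
Variables (k : comPzRingType) (M N : lmodType k).
(* balancing over a set P of "scalars" b : B acting on the right of M and
   on the left of N *)
Variables (B : Type) (P : B -> Prop) (ract : M -> B -> M) (lact : B -> N -> N).
Inductive tens2_gen : seq (M * N) -> seq (M * N) -> Prop :=
| t2_addl m m' n : tens2_gen [:: (m + m', n)] [:: (m, n); (m', n)]
| t2_addr m n n' : tens2_gen [:: (m, n + n')] [:: (m, n); (m, n')]
| t2_zerol n : tens2_gen [:: (0, n)] [::]
| t2_zeror m : tens2_gen [:: (m, 0)] [::]
| t2_scal (c : k) m n : tens2_gen [:: (c *: m, n)] [:: (m, c *: n)]
| t2_bal b m n : P b -> tens2_gen [:: (ract m b, n)] [:: (m, lact b n)].
Definition tens2_eq := fs_eq tens2_gen.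
End Tensor2.

Definition tensk_eq (k : comPzRingType) (M N : lmodType k) :=
  @tens2_eq k M N unit (fun _ => False) (fun m _ => m) (fun _ n => n).

Section Tensor3.
Variables (k : comPzRingType) (M N Q : lmodType k).
Variables (B1 : Type) (P1 : B1 -> Prop) (ract1 : M -> B1 -> M) (lact1 : B1 -> N -> N).
Variables (B2 : Type) (P2 : B2 -> Prop) (ract2 : N -> B2 -> N) (lact2 : B2 -> Q -> Q).
(* M (x)_{B1} N (x)_{B2} Q, elements (m, (n, q)) standing for m (x) n (x) q *)
Inductive tens3_gen : seq (M * (N * Q)) -> seq (M * (N * Q)) -> Prop :=
| t3_add1 m m' n q : tens3_gen [:: (m + m', (n, q))] [:: (m, (n, q)); (m', (n, q))]
| t3_add2 m n n' q : tens3_gen [:: (m, (n + n', q))] [:: (m, (n, q)); (m, (n', q))]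
| t3_add3 m n q q' : tens3_gen [:: (m, (n, q + q'))] [:: (m, (n, q)); (m, (n, q'))]
| t3_zero1 n q : tens3_gen [:: (0, (n, q))] [::]
| t3_zero2 m q : tens3_gen [:: (m, (0, q))] [::]
| t3_zero3 m n : tens3_gen [:: (m, (n, 0))] [::]
| t3_scal12 (c : k) m n q : tens3_gen [:: (c *: m, (n, q))] [:: (m, (c *: n, q))]
| t3_scal23 (c : k) m n q : tens3_gen [:: (m, (c *: n, q))] [:: (m, (n, c *: q))]
| t3_bal12 b m n q : P1 b -> tens3_gen [:: (ract1 m b, (n, q))] [:: (m, (lact1 b n, q))]
| t3_bal23 b m n q : P2 b -> tens3_gen [:: (m, (ract2 n b, q))] [:: (m, (n, lact2 b q))].
Definition tens3_eq := fs_eq tens3_gen.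
End Tensor3.

Definition tens3k_eq (k : comPzRingType) (M N Q : lmodType k) :=
  @tens3_eq k M N Q unit (fun _ => False) (fun m _ => m) (fun _ n => n)
                    unit (fun _ => False) (fun n _ => n) (fun _ q => q).

Record klcat (k : comPzRingType) (X : Type) := KLCat {
  hom :> X -> X -> lmodType k;
  comp : forall x y z, hom x y -> hom y z -> hom x z;
  idm : forall x, hom x x;
  compDl : forall x y z (a a' : hom x y) (b : hom y z),
      comp (a + a') b = comp a b + comp a' b;
  compDr : forall x y z (a : hom x y) (b b' : hom y z),
      comp a (b + b') = comp a b + comp a b';
  compZl : forall x y z (c : k) (a : hom x y) (b : hom y z),
      comp (c *: a) b = c *: comp a b;
  compZr : forall x y z (c : k) (a : hom x y) (b : hom y z),
      comp a (c *: b) = c *: comp a b;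
  compA : forall x y z w (a : hom x y) (b : hom y z) (d : hom z w),
      comp a (comp b d) = comp (comp a b) d;
  comp1l : forall x y (a : hom x y), comp (idm x) a = a;
  comp1r : forall x y (a : hom x y), comp a (idm y) = a }.
Arguments comp {k X} _ {x y z}.
Arguments idm {k X} _ x.

Record rmod (k : comPzRingType) (X : Type) (A : klcat k X) := RMod {
  mobj :> X -> X -> lmodType k;
  act : forall x y z, mobj x y -> A y z -> mobj x z;
  actDl : forall x y z (m m' : mobj x y) (a : A y z), act (m + m') a = act m a + act m' a;
  actDr : forall x y z (m : mobj x y) (a a' : A y z), act m (a + a') = act m a + act m a';
  actZl : forall x y z (c : k) (m : mobj x y) (a : A y z), act (c *: m) a = c *: act m a;
  actZr : forall x y z (c : k) (m : mobj x y) (a : A y z), act m (c *: a) = c *: act m a;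
  actA : forall x y z w (m : mobj x y) (a : A y z) (b : A z w),
      act (act m a) b = act m (comp A a b);
  act1 : forall x y (m : mobj x y), act m (idm A y) = m }.
Arguments act {k X A} _ {x y z}.

Definition rmod_morph (k : comPzRingType) (X : Type) (A : klcat k X) (M M' : rmod A)
  (f : forall x y, M x y -> M' x y) : Prop :=
  [/\ forall x y (m m' : M x y), f x y (m + m') = f x y m + f x y m',
      forall x y (c : k) (m : M x y), f x y (c *: m) = c *: f x y m &
      forall x y z (m : M x y) (a : A y z), f x z (act M m a) = act M' (f x y m) a].

Definition is_klinear (k : comPzRingType) (V W : lmodType k) (f : V -> W) :=
  (forall v v', f (v + v') = f v + f v') /\ (forall (c : k) v, f (c *: v) = c *: f v).

(* a k-linear map into V (x) W, represented by a choice of representatives *)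
Definition is_klinear_tk (k : comPzRingType) (U V W : lmodType k)
  (f : U -> seq (V * W)) :=
  (forall u u', tensk_eq (f (u + u')) (f u ++ f u')) /\
  (forall (c : k) u, tensk_eq (f (c *: u)) [seq (c *: p.1, p.2) | p <- f u]).

Definition is_coalg (k : comPzRingType) (C : lmodType k)
  (Delta : C -> seq (C * C)) (eps : C -> k) : Prop :=
  [/\ is_klinear_tk Delta,
      (forall h h', eps (h + h') = eps h + eps h') /\
      (forall (c : k) h, eps (c *: h) = c * eps h),
      forall h, tens3k_eq [seq (q.1, (q.2, p.2)) | p <- Delta h, q <- Delta p.1]
                          [seq (p.1, (q.1, q.2)) | p <- Delta h, q <- Delta p.2],
      forall h, \sum_(p <- Delta h) eps p.1 *: p.2 = h &
      forall h, \sum_(p <- Delta h) eps p.2 *: p.1 = h].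

Definition is_comodule (k : comPzRingType) (C V : lmodType k)
  (Delta : C -> seq (C * C)) (eps : C -> k) (rho : V -> seq (V * C)) : Prop :=
  [/\ is_klinear_tk rho,
      forall v, tens3k_eq [seq (q.1, (q.2, p.2)) | p <- rho v, q <- rho p.1]
                          [seq (p.1, (q.1, q.2)) | p <- rho v, q <- Delta p.2] &
      forall v, \sum_(p <- rho v) eps p.2 *: p.1 = v].

Record semiHopf (k : comPzRingType) (X : Type) := SemiHopf {
  hcat :> klcat k X;
  Delta : forall x y, hcat x y -> seq (hcat x y * hcat x y);
  eps : forall x y, hcat x y -> k;
  coalgH : forall x y, is_coalg (@Delta x y) (@eps x y);
  Delta_comp : forall x y z (h : hcat x y) (h' : hcat y z),
      tensk_eq (Delta (comp hcat h h'))
               [seq (comp hcat p.1 q.1, comp hcat p.2 q.2) | p <- Delta h, q <- Delta h'];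
  Delta_id : forall x, tensk_eq (Delta (idm hcat x)) [:: (idm hcat x, idm hcat x)];
  eps_comp : forall x y z (h : hcat x y) (h' : hcat y z),
      eps (comp hcat h h') = eps h * eps h';
  eps_id : forall x, eps (idm hcat x) = 1 }.
Arguments Delta {k X} _ {x y}.
Arguments eps {k X} _ {x y}.

Definition is_antipode (k : comPzRingType) (X : Type) (H : semiHopf k X)
  (S : forall x y, H x y -> H y x) : Prop :=
  forall x y, [/\ is_klinear (S x y),
    forall h : H x y, \sum_(p <- Delta H h) comp H p.1 (S x y p.2) = eps H h *: idm H x &
    forall h : H x y, \sum_(p <- Delta H h) comp H (S x y p.1) p.2 = eps H h *: idm H y].

Definition is_hopf_cat (k : comPzRingType) (X : Type) (H : semiHopf k X) : Prop :=
  exists S : forall x y, H x y -> H y x, is_antipode S.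

Record comodcat (k : comPzRingType) (X : Type) (H : semiHopf k X) := ComodCat {
  ccat :> klcat k X;
  crho : forall x y, ccat x y -> seq (ccat x y * H x y);
  crho_comod : forall x y, is_comodule (Delta H (x:=x) (y:=y)) (eps H) (@crho x y);
  crho_comp : forall x y z (a : ccat x y) (b : ccat y z),
      tensk_eq (crho (comp ccat a b))
               [seq (comp ccat p.1 q.1, comp H p.2 q.2) | p <- crho a, q <- crho b];
  crho_id : forall x, tensk_eq (crho (idm ccat x)) [:: (idm ccat x, idm H x)] }.
Arguments crho {k X H} _ {x y}.

Section Comod.
Variables (k : comPzRingType) (X : Type) (H : semiHopf k X) (A : comodcat H).

Definition coinv (x : X) (b : A x x) : Prop :=
  tensk_eq (crho A b) [:: (b, idm H x)].

(* equality in A_zx (x)_{B_x} A_xy *)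
Definition tensBAA_eq (z x y : X) : seq (A z x * A x y) -> seq (A z x * A x y) -> Prop :=
  tens2_eq (coinv (x:=x)) (fun (a : A z x) (b : A x x) => comp A a b)
                          (fun (b : A x x) (a : A x y) => comp A b a).

Definition can_map (z x y : X) (s : seq (A z x * A x y)) : seq (A z y * H x y) :=
  [seq (comp A p.1 q.1, q.2) | p <- s, q <- crho A p.2].

Definition is_galois : Prop :=
  forall z x y,
    (forall s t : seq (A z x * A x y),
       tensk_eq (can_map s) (can_map t) -> tensBAA_eq s t) /\
    (forall u : seq (A z y * H x y), exists s, tensk_eq (can_map (x:=x) s) u).

Definition is_hopfmod (M : rmod A) (rho : forall x y, M x y -> seq (M x y * H x y)) :=
  (forall x y, is_comodule (Delta H (x:=x) (y:=y)) (eps H) (rho x y)) /\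
  (forall x y z (m : M x y) (a : A y z),
      tensk_eq (rho x z (act M m a))
               [seq (act M p.1 q.1, comp H p.2 q.2) | p <- rho x y m, q <- crho A a]).

Definition hopfmod_morph (M M' : rmod A)
  (rho : forall x y, M x y -> seq (M x y * H x y))
  (rho' : forall x y, M' x y -> seq (M' x y * H x y))
  (f : forall x y, M x y -> M' x y) : Prop :=
  rmod_morph f /\
  (forall x y (m : M x y), tensk_eq (rho' x y (f x y m)) [seq (f x y p.1, p.2) | p <- rho x y m]).

(* equality in M_xx (x)_{B_x} A_xy *)
Definition tensBMA_eq (M : rmod A) (x y : X) :
  seq (M x x * A x y) -> seq (M x x * A x y) -> Prop :=
  tens2_eq (coinv (x:=x)) (fun (m : M x x) (b : A x x) => act M m b)
                          (fun (b : A x x) (a : A x y) => comp A b a).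

(* equality in M_xx (x)_{B_x} A_xx (x)_{B_x} A_xy *)
Definition tensBMAA_eq (M : rmod A) (x y : X) :
  seq (M x x * (A x x * A x y)) -> seq (M x x * (A x x * A x y)) -> Prop :=
  tens3_eq (coinv (x:=x)) (fun (m : M x x) (b : A x x) => act M m b)
                          (fun (b : A x x) (a : A x x) => comp A b a)
           (coinv (x:=x)) (fun (a : A x x) (b : A x x) => comp A a b)
                          (fun (b : A x x) (a : A x y) => comp A b a).

Definition is_descent (M : rmod A) (sigma : forall x y, M x y -> seq (M x x * A x y)) :=
  [/\
      forall x y (m m' : M x y), tensBMA_eq (sigma x y (m + m')) (sigma x y m ++ sigma x y m'),
      forall x y (c : k) (m : M x y),
        tensBMA_eq (sigma x y (c *: m)) [seq (c *: p.1, p.2) | p <- sigma x y m],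
      (* (i) *)
      forall x y z (m : M x y) (a : A y z),
        tensBMA_eq (sigma x z (act M m a)) [seq (p.1, comp A p.2 a) | p <- sigma x y m],
      (* (ii) *)
      forall x y (m : M x y),
        tensBMAA_eq [seq (q.1, (q.2, p.2)) | p <- sigma x y m, q <- sigma x x p.1]
                    [seq (p.1, (idm A x, p.2)) | p <- sigma x y m] &
      (* (iii) *)
      forall x y (m : M x y), \sum_(p <- sigma x y m) act M p.1 p.2 = m].

Definition descent_morph (M M' : rmod A)
  (sigma : forall x y, M x y -> seq (M x x * A x y))
  (sigma' : forall x y, M' x y -> seq (M' x x * A x y))
  (f : forall x y, M x y -> M' x y) : Prop :=
  rmod_morph f /\
  (forall x y (m : M x y),
      tensBMA_eq (sigma' x y (f x y m)) [seq (f x x p.1, p.2) | p <- sigma x y m]).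

Definition rho_of (M : rmod A) (sigma : forall x y, M x y -> seq (M x x * A x y))
  : forall x y, M x y -> seq (M x y * H x y) :=
  fun x y m => [seq (act M p.1 q.1, q.2) | p <- sigma x y m, q <- crho A p.2].

End Comod.

(* Main.v *)
Require Import Defs.
From HB Require Import structures.
From mathcomp Require Import all_boot all_order all_algebra.
From Stdlib Require Import ClassicalEpsilon.
Import Defs.
Set Implicit Arguments. Unset Strict Implicit. Unset Printing Implicit Defensive.
Import GRing.Theory.
Local Open Scope ring_scope.

Fixpoint lin (T : Type) (p : T) (s : seq T) : Prop :=
  if s is q :: s' then p = q \/ lin p s' else False.

Definition flat (T U : Type) (F : T -> seq U) (s : seq T) : seq U := flatten (map F s).

Lemma flat_cat T U (F : T -> seq U) s t : flat F (s ++ t) = flat F s ++ flat F t.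
Proof. by rewrite /flat map_cat flatten_cat. Qed.
Lemma flat_cons T U (F : T -> seq U) p s : flat F (p :: s) = F p ++ flat F s.
Proof. by []. Qed.
Lemma flat_nil T U (F : T -> seq U) : flat F [::] = [::].
Proof. by []. Qed.
Lemma flat1 T U (F : T -> seq U) p : flat F [:: p] = F p.
Proof. by rewrite flat_cons cats0. Qed.
Lemma flatA T U V (F : T -> seq U) (G : U -> seq V) s :
  flat G (flat F s) = flat (fun p => flat G (F p)) s.
Proof. by elim: s => //= p s IH; rewrite flat_cons flat_cat IH. Qed.
Lemma flat_map T U V (f : T -> U) (G : U -> seq V) s :
  flat G (map f s) = flat (fun p => G (f p)) s.
Proof. by elim: s => //= p s IH; rewrite !flat_cons IH. Qed.
Lemma map_flat T U V (F : T -> seq U) (g : U -> V) s :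
  map g (flat F s) = flat (fun p => map g (F p)) s.
Proof. by elim: s => //= p s IH; rewrite !flat_cons map_cat IH. Qed.
Lemma eq_flat T U (F G : T -> seq U) s : F =1 G -> flat F s = flat G s.
Proof. by move=> FG; rewrite /flat (eq_map FG). Qed.
Lemma eq_in_flat T U (F G : T -> seq U) s :
  (forall p, lin p s -> F p = G p) -> flat F s = flat G s.
Proof.
elim: s => //= p s IH FG; rewrite !flat_cons FG /=; last by left.
by rewrite IH // => q Hq; apply: FG; right.
Qed.
Lemma flat_comprE T U V (f : T -> U -> V) (t : T -> seq U) s :
  [seq f x y | x <- s, y <- t x] = flat (fun x => map (f x) (t x)) s.
Proof. by []. Qed.
Lemma flat_unit T U (s : seq T) (f : T -> U) : flat (fun p => [:: f p]) s = map f s.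
Proof. by elim: s => //= p s IH; rewrite flat_cons IH. Qed.
Lemma flat_id T (s : seq T) : flat (fun p => [:: p]) s = s.
Proof. by rewrite flat_unit map_id. Qed.

Section FS.
Context {T : Type} {g : seq T -> seq T -> Prop}.
Local Notation E := (fs_eq g).

Lemma E_refl s : E s s. Proof. exact: fs_refl. Qed.
Lemma E_sym s t : E s t -> E t s. Proof. exact: fs_sym. Qed.
Lemma E_trans s t u : E s t -> E t u -> E s u. Proof. exact: fs_trans. Qed.
Lemma E_cat s s' t t' : E s s' -> E t t' -> E (s ++ t) (s' ++ t').
Proof. exact: fs_cat. Qed.
Lemma E_catl s t t' : E t t' -> E (s ++ t) (s ++ t').
Proof. by move=> H; apply: E_cat => //; apply: E_refl. Qed.
Lemma E_catr s s' t : E s s' -> E (s ++ t) (s' ++ t).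
Proof. by move=> H; apply: E_cat => //; apply: E_refl. Qed.
Lemma E_catC s t : E (s ++ t) (t ++ s). Proof. exact: fs_swap. Qed.
Lemma E_eq s t : s = t -> E s t. Proof. by move->; apply: E_refl. Qed.
Lemma E_gen s t : g s t -> E s t. Proof. exact: fs_gen. Qed.
Lemma E_nil_cat s t : E s [::] -> E t [::] -> E (s ++ t) [::].
Proof. by move=> H1 H2; apply: (E_trans (E_cat H1 H2)); apply: E_refl. Qed.

Lemma E_flat_pt U (F G : U -> seq T) s :
  (forall p, lin p s -> E (F p) (G p)) -> E (flat F s) (flat G s).
Proof.
elim: s => [|p s IH] H; first exact: E_refl.
rewrite !flat_cons; apply: E_cat; first by apply: H; left.
by apply: IH => q Hq; apply: H; right.
Qed.
Lemma E_flat_pt' U (F G : U -> seq T) s :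
  (forall p, E (F p) (G p)) -> E (flat F s) (flat G s).
Proof. by move=> H; apply: E_flat_pt => p _. Qed.

Lemma E_flat_split U (F G : U -> seq T) s :
  E (flat (fun p => F p ++ G p) s) (flat F s ++ flat G s).
Proof.
elim: s => [|p s IH]; first exact: E_refl.
rewrite !flat_cons -!catA; apply: E_catl.
apply: (E_trans (E_catl _ IH)); rewrite !catA; apply: E_catr; exact: E_catC.
Qed.

Lemma E_flat_nil U (F : U -> seq T) s :
  (forall p, lin p s -> E (F p) [::]) -> E (flat F s) [::].
Proof.
move=> H; apply: (@E_trans _ (flat (fun _ => [::]) s)); first exact: E_flat_pt.
by elim: s {H} => [|p s IH]; [apply: E_refl|].
Qed.

Lemma E_swap U V (f : U -> V -> T) (s : seq U) (t : seq V) :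
  E (flat (fun a => map (f a) t) s) (flat (fun b => map (f^~ b) s) t).
Proof.
elim: s => [|a s IH].
  by rewrite flat_nil; apply: E_sym; apply: E_flat_nil => p _; apply: E_refl.
rewrite flat_cons; apply: (E_trans (E_catl _ IH)).
apply: E_sym; apply: (E_trans _ (E_catC _ _)).
apply: (@E_trans _ (flat (fun b => map (f^~ b) s ++ [:: f a b]) t)).
  by apply: E_flat_pt' => b /=; rewrite -cat1s; apply: E_catC.
apply: (E_trans (E_flat_split _ _ _)); apply: E_catl; rewrite flat_unit; exact: E_refl.
Qed.

Lemma E_map_split U (a b c : U -> T) W :
  (forall i, E [:: a i] [:: b i; c i]) -> E (map a W) (map b W ++ map c W).
Proof.
move=> H; rewrite -!flat_unit; apply: E_trans (E_flat_split _ _ W).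
by apply: E_flat_pt' => i; apply: H.
Qed.
Lemma E_map_nil U (a : U -> T) W : (forall i, E [:: a i] [::]) -> E (map a W) [::].
Proof. by move=> H; rewrite -flat_unit; apply: E_flat_nil => i _; apply: H. Qed.
Lemma E_map_pt U (a b : U -> T) W : (forall i, E [:: a i] [:: b i]) -> E (map a W) (map b W).
Proof. by move=> H; rewrite -!flat_unit; apply: E_flat_pt' => i; apply: H. Qed.
Lemma E_swapl U V (G : U -> V -> seq T) (s : seq U) (t : seq V) :
  E (flat (fun a => flat (G a) t) s) (flat (fun b => flat (G^~ b) s) t).
Proof.
elim: s => [|a s IH].
  by rewrite flat_nil; apply: E_sym; apply: E_flat_nil => p _; apply: E_refl.
rewrite flat_cons; apply: (E_trans (E_catl _ IH)).
apply: E_sym; apply: (E_trans (E_flat_split (fun b => G a b) (fun b => flat (G^~ b) s) t)).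
exact: E_refl.
Qed.
End FS.

Lemma fs_flat_map (T U : Type) (gT : seq T -> seq T -> Prop) (gU : seq U -> seq U -> Prop)
  (F : T -> seq U) :
  (forall s t, gT s t -> fs_eq gU (flat F s) (flat F t)) ->
  forall s t, fs_eq gT s t -> fs_eq gU (flat F s) (flat F t).
Proof.
move=> HF s t; elim=> {s t}.
- by move=> s t /HF.
- by move=> s; apply: E_refl.
- by move=> s t _ IH; apply: E_sym.
- by move=> s t u _ IH1 _ IH2; apply: E_trans IH2.
- by move=> s s' t t' _ IH1 _ IH2; rewrite !flat_cat; apply: E_cat.
- by move=> s t; rewrite !flat_cat; apply: E_catC.
Qed.

Lemma fs_sum (T : Type) (V : nmodType) (gT : seq T -> seq T -> Prop) (e : T -> V) :
  (forall s t, gT s t -> \sum_(p <- s) e p = \sum_(p <- t) e p) ->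
  forall s t, fs_eq gT s t -> \sum_(p <- s) e p = \sum_(p <- t) e p.
Proof.
move=> He s t; elim=> {s t}.
- by move=> s t H; apply: He.
- by [].
- by move=> s t _ ->.
- by move=> s t u _ -> _ ->.
- by move=> s s' t t' _ H1 _ H2; rewrite !big_cat H1 H2.
- by move=> s t; rewrite !big_cat; apply: addrC.
Qed.

Section T2.
Variables (k : comPzRingType) (M N : lmodType k).
Variables (B : Type) (P : B -> Prop) (ract : M -> B -> M) (lact : B -> N -> N).
Variables (U : Type) (gU : seq U -> seq U -> Prop).

Definition t2ok (F : M * N -> seq U) : Prop :=
  [/\ forall m m' n, fs_eq gU (F (m + m', n)) (F (m, n) ++ F (m', n)),
      forall m n n', fs_eq gU (F (m, n + n')) (F (m, n) ++ F (m, n')),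
      (forall n, fs_eq gU (F (0, n)) [::]) /\ (forall m, fs_eq gU (F (m, 0)) [::]),
      forall c m n, fs_eq gU (F (c *: m, n)) (F (m, c *: n)) &
      forall b m n, P b -> fs_eq gU (F (ract m b, n)) (F (m, lact b n))].

Lemma t2map F : t2ok F -> forall s t, tens2_eq P ract lact s t -> fs_eq gU (flat F s) (flat F t).
Proof.
case=> Hal Har [Hzl Hzr] Hs Hb; apply: fs_flat_map => s t; case=> *; rewrite /flat /= ?cats0.
- exact: Hal.
- exact: Har.
- exact: Hzl.
- exact: Hzr.
- exact: Hs.
- exact: Hb.
Qed.
End T2.

Section T3.
Variables (k : comPzRingType) (M N Q : lmodType k).
Variables (B1 : Type) (P1 : B1 -> Prop) (ract1 : M -> B1 -> M) (lact1 : B1 -> N -> N).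
Variables (B2 : Type) (P2 : B2 -> Prop) (ract2 : N -> B2 -> N) (lact2 : B2 -> Q -> Q).
Variables (U : Type) (gU : seq U -> seq U -> Prop).
Local Notation E := (fs_eq gU).

Definition t3ok (F : M * (N * Q) -> seq U) : Prop :=
  [/\ [/\ forall m m' n q, E (F (m + m', (n, q))) (F (m, (n, q)) ++ F (m', (n, q))),
          forall m n n' q, E (F (m, (n + n', q))) (F (m, (n, q)) ++ F (m, (n', q))) &
          forall m n q q', E (F (m, (n, q + q'))) (F (m, (n, q)) ++ F (m, (n, q')))],
      [/\ forall n q, E (F (0, (n, q))) [::],
          forall m q, E (F (m, (0, q))) [::] &
          forall m n, E (F (m, (n, 0))) [::]],
      forall c m n q, E (F (c *: m, (n, q))) (F (m, (c *: n, q))),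
      forall c m n q, E (F (m, (c *: n, q))) (F (m, (n, c *: q))) &
      (forall b m n q, P1 b -> E (F (ract1 m b, (n, q))) (F (m, (lact1 b n, q)))) /\
      (forall b m n q, P2 b -> E (F (m, (ract2 n b, q))) (F (m, (n, lact2 b q))))].

Lemma t3map F : t3ok F -> forall s t,
  tens3_eq P1 ract1 lact1 P2 ract2 lact2 s t -> E (flat F s) (flat F t).
Proof.
case=> [[H1 H2 H3] [Z1 Z2 Z3] S1 S2 [B1' B2']]; apply: fs_flat_map => s t;
  case=> *; rewrite /flat /= ?cats0.
- exact: H1.
- exact: H2.
- exact: H3.
- exact: Z1.
- exact: Z2.
- exact: Z3.
- exact: S1.
- exact: S2.
- exact: B1'.
- exact: B2'.
Qed.
End T3.

Section TK.
Variable k : comPzRingType.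

Lemma tk_addl (M N : lmodType k) (m m' : M) (n : N) :
  tensk_eq [:: (m + m', n)] [:: (m, n); (m', n)].
Proof. by apply: fs_gen; apply: t2_addl. Qed.
Lemma tk_addr (M N : lmodType k) (m : M) (n n' : N) :
  tensk_eq [:: (m, n + n')] [:: (m, n); (m, n')].
Proof. by apply: fs_gen; apply: t2_addr. Qed.
Lemma tk_zl (M N : lmodType k) (n : N) : tensk_eq [:: ((0 : M), n)] [::].
Proof. by apply: fs_gen; apply: t2_zerol. Qed.
Lemma tk_zr (M N : lmodType k) (m : M) : tensk_eq [:: (m, (0 : N))] [::].
Proof. by apply: fs_gen; apply: t2_zeror. Qed.
Lemma tk_scal (M N : lmodType k) c (m : M) (n : N) :
  tensk_eq [:: (c *: m, n)] [:: (m, c *: n)].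
Proof. by apply: fs_gen; apply: t2_scal. Qed.

Lemma lin0 (V W : lmodType k) (f : V -> W) : is_klinear f -> f 0 = 0.
Proof. by case=> Hf _; have h := Hf 0 0; rewrite addr0 in h; apply: (@addrI _ (f 0)); rewrite addr0 -h. Qed.

Lemma lin_sum (V W : lmodType k) (f : V -> W) I (r : seq I) (F : I -> V) :
  is_klinear f -> f (\sum_(i <- r) F i) = \sum_(i <- r) f (F i).
Proof.
move=> Hf; elim: r => [|i r IH]; first by rewrite !big_nil (lin0 Hf).
by rewrite !big_cons (proj1 Hf) IH.
Qed.

Lemma tk_lin0 (U V W : lmodType k) (R : U -> seq (V * W)) :
  is_klinear_tk R -> tensk_eq (R 0) [::].
Proof.
case=> _ HZ; rewrite -(scale0r (0 : U)); apply: E_trans (HZ 0 0) _.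
rewrite -flat_unit; apply: E_flat_nil => p _ /=; rewrite scale0r; exact: tk_zl.
Qed.

Lemma tk_W (I : Type) (W : seq I) (M N M' N' : lmodType k)
  (f : I -> M -> M') (g : I -> N -> N') :
  (forall i, is_klinear (f i)) -> (forall i, is_klinear (g i)) ->
  forall s t, tensk_eq s t ->
   tensk_eq (flat (fun p => [seq (f i p.1, g i p.2) | i <- W]) s)
            (flat (fun p => [seq (f i p.1, g i p.2) | i <- W]) t).
Proof.
move=> Hf Hg; apply: t2map; split.
- move=> m m' n; apply: E_map_split => i /=; rewrite (proj1 (Hf i)); exact: tk_addl.
- move=> m n n'; apply: E_map_split => i /=; rewrite (proj1 (Hg i)); exact: tk_addr.
- split=> m; apply: E_map_nil => i /=; rewrite ?(lin0 (Hf i)) ?(lin0 (Hg i));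
    [exact: tk_zl | exact: tk_zr].
- move=> c m n; apply: E_map_pt => i /=; rewrite (proj2 (Hf i)) (proj2 (Hg i)); exact: tk_scal.
- by [].
Qed.
End TK.

Section TK2.
Variable k : comPzRingType.
Lemma tk_map (M N M' N' : lmodType k) (f : M -> M') (g : N -> N') :
  is_klinear f -> is_klinear g -> forall s t, tensk_eq s t ->
  tensk_eq (map (fun p => (f p.1, g p.2)) s) (map (fun p => (f p.1, g p.2)) t).
Proof.
move=> Hf Hg s t Hst; have := @tk_W k unit [:: tt] M N M' N' (fun _ => f) (fun _ => g)
   (fun _ => Hf) (fun _ => Hg) s t Hst.
by rewrite !flat_unit.
Qed.
Lemma lin_id (V : lmodType k) : is_klinear (@id V).
Proof. by []. Qed.
Lemma tk_mapl (M N M' : lmodType k) (f : M -> M') :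
  is_klinear f -> forall (s t : seq (M * N)), tensk_eq s t ->
  tensk_eq (map (fun p => (f p.1, p.2)) s) (map (fun p => (f p.1, p.2)) t).
Proof. by move=> Hf; apply: (tk_map Hf (@lin_id N)). Qed.
Lemma tk_mapr (M N N' : lmodType k) (g : N -> N') :
  is_klinear g -> forall (s t : seq (M * N)), tensk_eq s t ->
  tensk_eq (map (fun p => (p.1, g p.2)) s) (map (fun p => (p.1, g p.2)) t).
Proof. by move=> Hg; apply: (tk_map (@lin_id M) Hg). Qed.
End TK2.

Section Cat.
Variables (k : comPzRingType) (X : Type) (C : klcat k X).
Lemma compl_lin x y z (b : C y z) : is_klinear (fun a : C x y => comp C a b).
Proof. by split=> *; rewrite ?compDl ?compZl. Qed.
Lemma compr_lin x y z (a : C x y) : is_klinear (fun b : C y z => comp C a b).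
Proof. by split=> *; rewrite ?compDr ?compZr. Qed.
Lemma comp0l x y z (b : C y z) : comp C (0 : C x y) b = 0.
Proof. exact: (lin0 (@compl_lin x y z b)). Qed.
Lemma comp0r x y z (a : C x y) : comp C a (0 : C y z) = 0.
Proof. exact: (lin0 (@compr_lin x y z a)). Qed.
End Cat.

Section Mod.
Variables (k : comPzRingType) (X : Type) (A : klcat k X) (M : rmod A).
Lemma actl_lin x y z (a : A y z) : is_klinear (fun m : M x y => act M m a).
Proof. by split=> *; rewrite ?actDl ?actZl. Qed.
Lemma actr_lin x y z (m : M x y) : is_klinear (fun a : A y z => act M m a).
Proof. by split=> *; rewrite ?actDr ?actZr. Qed.
Lemma act0l x y z (a : A y z) : act M (0 : M x y) a = 0.
Proof. exact: (lin0 (@actl_lin x y z a)). Qed.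
Lemma act0r x y z (m : M x y) : act M m (0 : A y z) = 0.
Proof. exact: (lin0 (@actr_lin x y z m)). Qed.
End Mod.

Arguments actl_lin {k X A M x y z} a.
Arguments actr_lin {k X A M x y z} m.
Arguments compl_lin {k X C x y z} b.
Arguments compr_lin {k X C x y z} a.

Definition Areg (k : comPzRingType) (X : Type) (A : klcat k X) : rmod A :=
  @RMod k X A A (fun x y z a b => comp A a b) (@compDl _ _ A) (@compDr _ _ A)
    (@compZl _ _ A) (@compZr _ _ A)
    (fun x y z w a b d => esym (compA a b d)) (@comp1r _ _ A).

Section K3.
Context {k : comPzRingType}.
Context {M N Q : lmodType k}.
Context {B1 : Type} {P1 : B1 -> Prop} {ract1 : M -> B1 -> M} {lact1 : B1 -> N -> N}.
Context {B2 : Type} {P2 : B2 -> Prop} {ract2 : N -> B2 -> N} {lact2 : B2 -> Q -> Q}.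
Local Notation T3 := (tens3_eq P1 ract1 lact1 P2 ract2 lact2).

Lemma t3_E_add1 m m' n q : T3 [:: (m + m', (n, q))] [:: (m, (n, q)); (m', (n, q))].
Proof. by apply: fs_gen; apply: t3_add1. Qed.
Lemma t3_E_add2 m n n' q : T3 [:: (m, (n + n', q))] [:: (m, (n, q)); (m, (n', q))].
Proof. by apply: fs_gen; apply: t3_add2. Qed.
Lemma t3_E_add3 m n q q' : T3 [:: (m, (n, q + q'))] [:: (m, (n, q)); (m, (n, q'))].
Proof. by apply: fs_gen; apply: t3_add3. Qed.
Lemma t3_E_z1 n q : T3 [:: (0, (n, q))] [::].
Proof. by apply: fs_gen; apply: t3_zero1. Qed.
Lemma t3_E_z2 m q : T3 [:: (m, (0, q))] [::].
Proof. by apply: fs_gen; apply: t3_zero2. Qed.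
Lemma t3_E_z3 m n : T3 [:: (m, (n, 0))] [::].
Proof. by apply: fs_gen; apply: t3_zero3. Qed.
Lemma t3_E_s12 c m n q : T3 [:: (c *: m, (n, q))] [:: (m, (c *: n, q))].
Proof. by apply: fs_gen; apply: t3_scal12. Qed.
Lemma t3_E_s23 c m n q : T3 [:: (m, (c *: n, q))] [:: (m, (n, c *: q))].
Proof. by apply: fs_gen; apply: t3_scal23. Qed.
Lemma t3_E_b12 b m n q : P1 b -> T3 [:: (ract1 m b, (n, q))] [:: (m, (lact1 b n, q))].
Proof. by move=> h; apply: fs_gen; apply: t3_bal12. Qed.
Lemma t3_E_b23 b m n q : P2 b -> T3 [:: (m, (ract2 n b, q))] [:: (m, (n, lact2 b q))].
Proof. by move=> h; apply: fs_gen; apply: t3_bal23. Qed.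

Lemma tk_T3_12 (I : Type) (V : seq I) (M0 N0 : lmodType k)
  (f : I -> M0 -> M) (g : I -> N0 -> N) (c : I -> Q) :
  (forall i, is_klinear (f i)) -> (forall i, is_klinear (g i)) ->
  forall s t, tensk_eq s t ->
   T3 (flat (fun p => [seq (f i p.1, (g i p.2, c i)) | i <- V]) s)
      (flat (fun p => [seq (f i p.1, (g i p.2, c i)) | i <- V]) t).
Proof.
move=> Hf Hg; apply: t2map; split.
- move=> m m' n; apply: E_map_split => i /=; rewrite (proj1 (Hf i)); exact: t3_E_add1.
- move=> m n n'; apply: E_map_split => i /=; rewrite (proj1 (Hg i)); exact: t3_E_add2.
- split=> m; apply: E_map_nil => i /=; rewrite ?(lin0 (Hf i)) ?(lin0 (Hg i));
    [exact: t3_E_z1 | exact: t3_E_z2].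
- move=> c' m n; apply: E_map_pt => i /=; rewrite (proj2 (Hf i)) (proj2 (Hg i)); exact: t3_E_s12.
- by [].
Qed.

Lemma tk_T3_23 (I : Type) (V : seq I) (N0 Q0 : lmodType k)
  (c : I -> M) (f : I -> N0 -> N) (g : I -> Q0 -> Q) :
  (forall i, is_klinear (f i)) -> (forall i, is_klinear (g i)) ->
  forall s t, tensk_eq s t ->
   T3 (flat (fun p => [seq (c i, (f i p.1, g i p.2)) | i <- V]) s)
      (flat (fun p => [seq (c i, (f i p.1, g i p.2)) | i <- V]) t).
Proof.
move=> Hf Hg; apply: t2map; split.
- move=> m m' n; apply: E_map_split => i /=; rewrite (proj1 (Hf i)); exact: t3_E_add2.
- move=> m n n'; apply: E_map_split => i /=; rewrite (proj1 (Hg i)); exact: t3_E_add3.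
- split=> m; apply: E_map_nil => i /=; rewrite ?(lin0 (Hf i)) ?(lin0 (Hg i));
    [exact: t3_E_z2 | exact: t3_E_z3].
- move=> c' m n; apply: E_map_pt => i /=; rewrite (proj2 (Hf i)) (proj2 (Hg i)); exact: t3_E_s23.
- by [].
Qed.
Lemma tk_T3_pre (c : M) (s t : seq (N * Q)) : tensk_eq s t ->
  T3 (map (fun p => (c, p)) s) (map (fun p => (c, p)) t).
Proof.
move=> Hst; have := @tk_T3_23 unit [:: tt] N Q (fun _ => c) (fun _ => id) (fun _ => id)
  (fun _ => lin_id _) (fun _ => lin_id _) s t Hst.
by rewrite !flat_unit; congr T3; apply: eq_map => -[].
Qed.
Lemma tk_T3_post (c : Q) (s t : seq (M * N)) : tensk_eq s t ->
  T3 (map (fun p => (p.1, (p.2, c))) s) (map (fun p => (p.1, (p.2, c))) t).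
Proof.
move=> Hst; have := @tk_T3_12 unit [:: tt] M N (fun _ => id) (fun _ => id) (fun _ => c)
  (fun _ => lin_id _) (fun _ => lin_id _) s t Hst.
by rewrite !flat_unit.
Qed.
End K3.

Section K3b.
Variable k : comPzRingType.
Lemma k3_T3 (M N Q M' N' Q' : lmodType k)
  {B1 : Type} {P1 : B1 -> Prop} {ract1 : M' -> B1 -> M'} {lact1 : B1 -> N' -> N'}
  {B2 : Type} {P2 : B2 -> Prop} {ract2 : N' -> B2 -> N'} {lact2 : B2 -> Q' -> Q'}
  (f : M -> M') (g : N -> N') (h : Q -> Q') :
  is_klinear f -> is_klinear g -> is_klinear h ->
  forall s t, tens3k_eq s t ->
  tens3_eq P1 ract1 lact1 P2 ract2 lact2
    (map (fun p => (f p.1, (g p.2.1, h p.2.2))) s) (map (fun p => (f p.1, (g p.2.1, h p.2.2))) t).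
Proof.
move=> Hf Hg Hh s t Hst; rewrite -!flat_unit; move: s t Hst; apply: t3map; split.
- split=> * /=; rewrite ?(proj1 Hf) ?(proj1 Hg) ?(proj1 Hh);
    [exact: t3_E_add1 | exact: t3_E_add2 | exact: t3_E_add3].
- split=> * /=; rewrite ?(lin0 Hf) ?(lin0 Hg) ?(lin0 Hh);
    [exact: t3_E_z1 | exact: t3_E_z2 | exact: t3_E_z3].
- by move=> * /=; rewrite (proj2 Hf) (proj2 Hg); exact: t3_E_s12.
- by move=> * /=; rewrite (proj2 Hg) (proj2 Hh); exact: t3_E_s23.
- by split.
Qed.
End K3b.

Section Main.
Variables (k : comPzRingType) (X : Type) (H : semiHopf k X) (A : comodcat H).

Lemma crho_lin x y : is_klinear_tk (@crho k X H A x y).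
Proof. by case: (crho_comod A x y). Qed.
Lemma Delta_lin x y : is_klinear_tk (@Delta k X H x y).
Proof. by case: (coalgH H x y). Qed.
Lemma epsD x y (h h' : H x y) : eps H (h + h') = eps H h + eps H h'.
Proof. by case: (coalgH H x y) => _ [E1 E2]. Qed.
Lemma epsZ x y c (h : H x y) : eps H (c *: h) = c * eps H h.
Proof. by case: (coalgH H x y) => _ [E1 E2]. Qed.
Lemma crho0 x y : tensk_eq (crho A (0 : A x y)) [::].
Proof. exact: tk_lin0 (crho_lin x y). Qed.
Lemma Delta0 x y : tensk_eq (Delta H (0 : H x y)) [::].
Proof. exact: tk_lin0 (Delta_lin x y). Qed.
Lemma crhoD x y (a a' : A x y) : tensk_eq (crho A (a + a')) (crho A a ++ crho A a').
Proof. by case: (crho_lin x y) => h _; apply: h. Qed.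
Lemma crhoZ x y c (a : A x y) :
  tensk_eq (crho A (c *: a)) (map (fun p => (c *: p.1, p.2)) (crho A a)).
Proof. by case: (crho_lin x y) => _ h; apply: h. Qed.
Lemma DeltaD x y (a a' : H x y) : tensk_eq (Delta H (a + a')) (Delta H a ++ Delta H a').
Proof. by case: (Delta_lin x y) => h _; apply: h. Qed.
Lemma DeltaZ x y c (a : H x y) :
  tensk_eq (Delta H (c *: a)) (map (fun p => (c *: p.1, p.2)) (Delta H a)).
Proof. by case: (Delta_lin x y) => _ h; apply: h. Qed.

Definition Psi (M : rmod A) x y z (s : seq (M x y * H x y)) (t : seq (A y z * H y z)) :
  seq (M x z * H x z) :=
  flat (fun p => map (fun q => (act M p.1 q.1, comp H p.2 q.2)) t) s.

Lemma Psi_l (M : rmod A) x y z (s s' : seq (M x y * H x y)) (t : seq (A y z * H y z)) :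
  tensk_eq s s' -> tensk_eq (Psi s t) (Psi s' t).
Proof.
move=> Hs; have := @tk_W k _ t _ _ _ _ (fun q (m : M x y) => act M m q.1)
  (fun q (h : H x y) => comp H h q.2) (fun q => actl_lin q.1) (fun q => compl_lin q.2) s s' Hs.
by [].
Qed.
Lemma Psi_r (M : rmod A) x y z (s : seq (M x y * H x y)) (t t' : seq (A y z * H y z)) :
  tensk_eq t t' -> tensk_eq (Psi s t) (Psi s t').
Proof.
move=> Ht; apply: E_flat_pt' => p.
exact: (tk_map (actr_lin _) (compr_lin _) Ht).
Qed.
Lemma Psi_cat_l (M : rmod A) x y z (s s' : seq (M x y * H x y)) (t : seq (A y z * H y z)) :
  Psi (s ++ s') t = Psi s t ++ Psi s' t.
Proof. exact: flat_cat. Qed.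

Lemma crho_Psi x y z (a : A x y) (b : A y z) :
  tensk_eq (crho A (comp A a b)) (Psi (M := Areg A) (crho A a) (crho A b)).
Proof. exact: crho_comp. Qed.

Lemma coinvP x (b : A x x) : coinv b -> tensk_eq (crho A b) [:: (b, idm H x)].
Proof. by []. Qed.

Lemma crho_coinv_l x y (b : A x x) (a : A x y) : coinv b ->
  tensk_eq (crho A (comp A b a)) (map (fun q => (comp A b q.1, q.2)) (crho A a)).
Proof.
move=> Hb; apply: (E_trans (crho_Psi _ _)).
apply: (E_trans (@Psi_l (Areg A) _ _ _ _ _ (crho A a) Hb)); rewrite /Psi flat1 /=.
by apply: E_eq; apply: eq_map => q; rewrite comp1l.
Qed.

Lemma crho_coinv_r x y (a : A y x) (b : A x x) : coinv b ->
  tensk_eq (crho A (comp A a b)) (map (fun q => (comp A q.1 b, q.2)) (crho A a)).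
Proof.
move=> Hb; apply: (E_trans (crho_Psi _ _)).
apply: (E_trans (@Psi_r (Areg A) _ _ _ (crho A a) _ _ Hb)); rewrite /Psi -flat_unit.
by apply: E_eq; apply: eq_flat => q /=; rewrite comp1r.
Qed.

Definition tensB (M : rmod A) z x y : seq (M z x * A x y) -> seq (M z x * A x y) -> Prop :=
  tens2_eq (@coinv k X H A x) (fun m b => act M m b) (fun b a => comp A b a).

Definition Phi (M : rmod A) z x y (s : seq (M z x * A x y)) : seq (M z y * H x y) :=
  flat (fun p => map (fun q => (act M p.1 q.1, q.2)) (crho A p.2)) s.

Lemma Phi_wd (M : rmod A) z x y (s t : seq (M z x * A x y)) :
  tensB s t -> tensk_eq (Phi s) (Phi t).
Proof.
apply: t2map; split.
- move=> m m' n; apply: E_map_split => q /=; rewrite actDl; exact: tk_addl.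
- move=> m n n' /=; rewrite -map_cat.
  exact: (tk_mapl (actr_lin _) (crhoD _ _)).
- split=> [n|m] /=.
    by apply: E_map_nil => q; rewrite act0l; apply: tk_zl.
  exact: (tk_mapl (actr_lin _) (crho0 _ _)).
- move=> c m n /=; apply: E_trans (E_sym (tk_mapl (actr_lin _) (crhoZ _ _))).
  by rewrite -map_comp; apply: E_eq; apply: eq_map => q /=; rewrite actZl actZr.
- move=> b m n Hb /=; apply: E_trans (E_sym (tk_mapl (actr_lin _) (crho_coinv_l _ Hb))).
  by rewrite -map_comp; apply: E_eq; apply: eq_map => q /=; rewrite actA.
Qed.

End Main.

Section Main2.
Variables (k : comPzRingType) (X : Type) (H : semiHopf k X) (A : comodcat H).

Lemma crho_counit x y (a : A x y) : \sum_(q <- crho A a) eps H q.2 *: q.1 = a.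
Proof. by case: (crho_comod A x y). Qed.

Lemma Phi_counit (M : rmod A) z x y (s : seq (M z x * A x y)) :
  \sum_(p <- Phi s) eps H p.2 *: p.1 = \sum_(p <- s) act M p.1 p.2.
Proof.
elim: s => [|p s IH]; first by rewrite /Phi !big_nil.
rewrite /Phi flat_cons big_cat -/(Phi s) IH big_cons; congr (_ + _).
rewrite big_map /=; rewrite -[in RHS](crho_counit p.2) (lin_sum _ _ (actr_lin _)).
by apply: eq_bigr => q _; rewrite actZr.
Qed.

Lemma Phi_scal (M : rmod A) z x y c (s : seq (M z x * A x y)) :
  Phi (map (fun p => (c *: p.1, p.2)) s) = map (fun p => (c *: p.1, p.2)) (Phi s).
Proof.
rewrite /Phi flat_map map_flat; apply: eq_flat => p /=.
by rewrite -!map_comp; apply: eq_map => q /=; rewrite actZl.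
Qed.

Lemma Phi_comp (M : rmod A) x y z (s : seq (M x x * A x y)) (a : A y z) :
  tensk_eq (Phi (map (fun p => (p.1, comp A p.2 a)) s)) (Psi (Phi s) (crho A a)).
Proof.
rewrite /Phi /Psi flat_map flatA; apply: E_flat_pt' => p /=.
apply: E_trans (tk_mapl (actr_lin _) (crho_Psi _ _)) _.
rewrite /Psi map_flat flat_map; apply: E_eq; apply: eq_flat => q /=.
by rewrite -map_comp; apply: eq_map => r /=; rewrite actA.
Qed.

Section Desc.
Variables (M : rmod A) (sigma : forall x y, M x y -> seq (M x x * A x y)).
Hypothesis Hs : is_descent sigma.

Lemma rho_lin x y : is_klinear_tk (rho_of sigma (x:=x) (y:=y)).
Proof.
case: Hs => HD HZ _ _ _; split.
  move=> m m'; apply: E_trans (Phi_wd (HD _ _ m m')) _; rewrite /Phi flat_cat; exact: E_refl.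
move=> c m; apply: E_trans (Phi_wd (HZ _ _ c m)) _; rewrite Phi_scal; exact: E_refl.
Qed.

Lemma rho_act x y z (m : M x y) (a : A y z) :
  tensk_eq (rho_of sigma (act M m a)) (Psi (rho_of sigma m) (crho A a)).
Proof.
case: Hs => _ _ Hi _ _.
apply: E_trans (Phi_wd (Hi _ _ _ m a)) _; exact: Phi_comp.
Qed.

Lemma rho_counit x y (m : M x y) : \sum_(p <- rho_of sigma m) eps H p.2 *: p.1 = m.
Proof. case: Hs => _ _ _ _ Hiii; exact: (etrans (Phi_counit _) (Hiii _ _ m)). Qed.

End Desc.
End Main2.

Section Coassoc.
Variables (k : comPzRingType) (X : Type) (H : semiHopf k X) (A : comodcat H).

Definition Va z w x y (s : seq (A z w * H x y)) : seq (A z w * (H x y * H x y)) :=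
  flat (fun p => map (fun d => (p.1, d)) (Delta H p.2)) s.

Lemma Va_wd z w x y (s t : seq (A z w * H x y)) : tensk_eq s t -> tens3k_eq (Va s) (Va t).
Proof.
apply: t2map; split.
- move=> m m' n; apply: E_map_split => [[d1 d2]] /=; exact: t3_E_add1.
- by move=> m n n' /=; rewrite -map_cat; apply: tk_T3_pre; apply: DeltaD.
- split=> [n|m] /=; first by apply: E_map_nil => [[d1 d2]]; exact: t3_E_z1.
  exact: (tk_T3_pre m (Delta0 H x y)).
- move=> c m n /=.
  apply: E_trans _ (E_sym (tk_T3_pre m (DeltaZ c n))).
  rewrite -map_comp -!flat_unit; apply: E_flat_pt' => [[d1 d2]] /=; exact: t3_E_s12.
- by [].
Qed.

Lemma Va_mapl z w x y (f : A z w -> A z w) (L : seq (A z w * H x y)) :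
  Va (map (fun p => (f p.1, p.2)) L) = map (fun v => (f v.1, v.2)) (Va L).
Proof.
rewrite /Va flat_map map_flat; apply: eq_flat => p /=.
by rewrite -!map_comp.
Qed.

Lemma Va_cat z w x y (s t : seq (A z w * H x y)) : Va (s ++ t) = Va s ++ Va t.
Proof. exact: flat_cat. Qed.

Section K.
Variables (M : rmod A) (x y : X).

Definition Gk (w : M x x * H x x) (V : seq (A x y * (H x y * H x y))) :
  seq (M x y * (H x y * H x y)) :=
  map (fun v => (act M w.1 v.1, (comp H w.2 v.2.1, v.2.2))) V.

Lemma Gk_l V (s t : seq (M x x * H x x)) : tensk_eq s t ->
  tens3k_eq (flat (fun w => Gk w V) s) (flat (fun w => Gk w V) t).
Proof.
move=> Hst; exact: (tk_T3_12 V
  (f:=fun v m => act M m v.1) (g:=fun v h => comp H h v.2.1) (fun v => v.2.2)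
  (fun v => actl_lin _) (fun v => compl_lin _) Hst).
Qed.

Lemma Gk_r w (V V' : seq (A x y * (H x y * H x y))) : tens3k_eq V V' ->
  tens3k_eq (Gk w V) (Gk w V').
Proof.
exact: (k3_T3 (actr_lin w.1) (compr_lin w.2) (lin_id _)).
Qed.

Definition KK (a : A x y) (u : seq (M x x * A x x)) :=
  flat (fun w => Gk w (Va (crho A a))) (Phi u).

Lemma KK_l a u u' : tensB u u' -> tens3k_eq (KK a u) (KK a u').
Proof. by move=> h; apply: Gk_l; apply: Phi_wd. Qed.

Lemma KK_cat a u u' : KK a (u ++ u') = KK a u ++ KK a u'.
Proof. by rewrite /KK /Phi !flat_cat. Qed.

Definition Kmap (p : M x x * (A x x * A x y)) := KK p.2.2 [:: (p.1, p.2.1)].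

Lemma tB_gen (u v : seq (M x x * A x x)) :
  tens2_gen (@coinv k X H A x) (fun m b => act M m b) (fun b a => comp A b a) u v ->
  tensB u v.
Proof. exact: fs_gen. Qed.

Lemma flat2 T U (F : T -> seq U) p p' : flat F [:: p; p'] = F p ++ F p'.
Proof. by rewrite flat_cons flat1. Qed.

Lemma K_wd s t : tensBMAA_eq s t -> tens3k_eq (flat Kmap s) (flat Kmap t).
Proof.
apply: t3map; split.
- split.
  + move=> m m' n q; rewrite /Kmap /= -KK_cat.
    by apply: KK_l; apply: tB_gen; apply: t2_addl.
  + move=> m n n' q; rewrite /Kmap /= -KK_cat.
    by apply: KK_l; apply: tB_gen; apply: t2_addr.
  + move=> m n q q'; rewrite /Kmap /KK /=.
    apply: E_trans _ (E_flat_split _ _ _).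
    apply: E_flat_pt' => w; rewrite -map_cat -Va_cat; apply: Gk_r; apply: Va_wd.
    exact: crhoD.
- split.
  + move=> n q; rewrite /Kmap /=.
    have -> : [::] = KK q [::] by [].
    by apply: KK_l; apply: tB_gen; apply: t2_zerol.
  + move=> m q; rewrite /Kmap /=.
    have -> : [::] = KK q [::] by [].
    by apply: KK_l; apply: tB_gen; apply: t2_zeror.
  + move=> m n; rewrite /Kmap /KK /=; apply: E_flat_nil => w _.
    have -> : [::] = Gk w (Va [::]) by [].
    by apply: Gk_r; apply: Va_wd; apply: crho0.
- move=> c m n q; rewrite /Kmap /=.
  by apply: KK_l; apply: tB_gen; apply: t2_scal.
- move=> c m n q; rewrite /Kmap /=.
  have h : tensB [:: (c *: m, n)] [:: (m, c *: n)] by apply: tB_gen; apply: t2_scal.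
  apply: E_trans (KK_l q (E_sym h)) _.
  rewrite /KK; have -> : Phi [:: (c *: m, n)] = map (fun p => (c *: p.1, p.2)) (Phi [:: (m, n)]).
    by rewrite -Phi_scal.
  rewrite flat_map; apply: E_flat_pt' => w.
  apply: E_trans _ (E_sym (Gk_r _ (Va_wd (crhoZ _ _)))).
  rewrite Va_mapl /Gk -map_comp; apply: E_eq; apply: eq_map => v /=.
  by rewrite actZl actZr.
- split.
  + move=> b m n q Hb; rewrite /Kmap /=.
    by apply: KK_l; apply: tB_gen; apply: t2_bal.
  + move=> b m n q Hb; rewrite /Kmap /KK /Phi !flat1 /=.
    apply: E_trans (Gk_l _ (tk_mapl (actr_lin m) (crho_coinv_r n Hb))) _.
    rewrite -map_comp flat_map /=.
    rewrite flat_map; apply: E_flat_pt' => e.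
    apply: E_trans _ (E_sym (Gk_r _ (Va_wd (crho_coinv_l _ Hb)))).
    rewrite Va_mapl /Gk -map_comp; apply: E_eq; apply: eq_map => v /=.
    by rewrite !actA compA.
Qed.

End K.

End Coassoc.
Arguments Kmap {k X H A M x y} p.
Arguments Gk {k X H A M x y} w V.
Arguments KK {k X H A M x y} a u.
Arguments Va {k X H A z w x y} s.

Section Part1.
Variables (k : comPzRingType) (X : Type) (H : semiHopf k X) (A : comodcat H).

Lemma crho_coassoc x y (a : A x y) :
  tens3k_eq (flat (fun p => map (fun q => (q.1, (q.2, p.2))) (crho A p.1)) (crho A a))
            (Va (crho A a)).
Proof.
case: (crho_comod A x y) => _ h _; apply: E_trans (h a) _.
apply: E_eq; apply: eq_flat => p /=; apply: eq_map => -[].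
by [].
Qed.

Variables (M : rmod A) (sigma : forall x y, M x y -> seq (M x x * A x y)).
Hypothesis Hs : is_descent sigma.

Lemma rho_coassoc x y (m : M x y) :
  tens3k_eq [seq (q.1, (q.2, p.2)) | p <- rho_of sigma m, q <- rho_of sigma p.1]
            [seq (p.1, (q.1, q.2)) | p <- rho_of sigma m, q <- Delta H p.2].
Proof.
case: Hs => _ _ _ Hii _.
pose L2 := flat (fun s => flat (fun w => Gk w (Va (crho A s.2))) (rho_of sigma s.1))
   (sigma m).
have CA : tens3k_eq [seq (q.1, (q.2, p.2)) | p <- rho_of sigma m, q <- rho_of sigma p.1] L2.
  rewrite flat_comprE /= -/(Phi (sigma m)) /Phi flatA /L2.
  apply: E_flat_pt' => s; rewrite flat_map /=.
  apply: E_trans.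
    apply: E_flat_pt' => a.
    exact: tk_T3_post (rho_act Hs s.1 a.1).
  rewrite /Psi /=.
  pose Z (a : A x y * H x y) (w : M x x * H x x) :=
    map (fun q => (act M w.1 q.1, (comp H w.2 q.2, a.2))) (crho A a.1).
  have e1 : tens3k_eq (flat (fun w => Gk w (Va (crho A s.2))) (rho_of sigma s.1))
     (flat (fun w => flat (Z^~ w) (crho A s.2)) (rho_of sigma s.1)).
    apply: E_flat_pt' => w; apply: E_trans (Gk_r w (E_sym (crho_coassoc s.2))) _.
    rewrite /Gk map_flat; apply: E_eq; apply: eq_flat => a /=.
    by rewrite -map_comp.
  apply: E_trans _ (E_sym e1); apply: E_trans _ (E_swapl Z _ _).
  apply: E_eq; apply: eq_flat => a /=; rewrite map_flat; apply: eq_flat => w /=.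
  by rewrite -map_comp.
have CB : flat Kmap [seq (q.1, (q.2, p.2)) | p <- sigma m, q <- sigma p.1] = L2.
  change (flat Kmap (flat (fun p => map (fun q => (q.1, (q.2, p.2))) (sigma p.1)) (sigma m))
     = L2).
  rewrite /L2 flatA; apply: eq_flat => p /=; rewrite flat_map /rho_of.
  change (flat (fun q => Kmap (q.1, (q.2, p.2))) (sigma p.1) =
     flat (fun w => Gk w (Va (crho A p.2))) (Phi (sigma p.1))).
  rewrite /Phi flatA; apply: eq_flat => q /=.
  by rewrite /Kmap /KK /Phi /= flat1.
have CC : tens3k_eq (flat Kmap [seq (p.1, (idm A x, p.2)) | p <- sigma m])
   [seq (p.1, (q.1, q.2)) | p <- rho_of sigma m, q <- Delta H p.2].
  rewrite flat_map flat_comprE /rho_of -/(Phi (sigma m)) /Phi flatA.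
  apply: E_flat_pt' => p /=; rewrite /Kmap /KK /=.
  have e2 : tensk_eq (Phi [:: (p.1, idm A x)]) [:: (p.1, idm H x)].
    rewrite /Phi flat1 /=; apply: E_trans (tk_mapl (actr_lin p.1) (crho_id A x)) _.
    by rewrite /= act1; apply: E_refl.
  apply: E_trans (Gk_l _ e2) _; rewrite flat1 /Gk /Va map_flat flat_map.
  apply: E_eq; apply: eq_flat => e /=; rewrite -map_comp; apply: eq_map => d /=.
  by rewrite comp1l; case: d.
apply: E_trans CA _; rewrite -CB; apply: E_trans (K_wd (Hii _ _ m)) _; exact: CC.
Qed.


End Part1.

Section Part12.
Variables (k : comPzRingType) (X : Type) (H : semiHopf k X) (A : comodcat H).

Lemma part1 (M : rmod A) (sigma : forall x y, M x y -> seq (M x x * A x y)) :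
  is_descent sigma -> is_hopfmod (rho_of sigma).
Proof.
move=> Hs; split.
  move=> x y; split.
  - exact: rho_lin.
  - by move=> m; apply: rho_coassoc.
  - by move=> m; apply: rho_counit.
by move=> x y z m a; apply: rho_act.
Qed.

Lemma Phi_morph (M M' : rmod A) (f : forall x y, M x y -> M' x y) z x y
  (s : seq (M z x * A x y)) : rmod_morph f ->
  Phi (map (fun p => (f z x p.1, p.2)) s) = map (fun p => (f z y p.1, p.2)) (Phi s).
Proof.
case=> _ _ Hf; rewrite /Phi flat_map map_flat; apply: eq_flat => p /=.
by rewrite -map_comp; apply: eq_map => q /=; rewrite Hf.
Qed.

Lemma part2 (M M' : rmod A) (sigma : forall x y, M x y -> seq (M x x * A x y))
  (sigma' : forall x y, M' x y -> seq (M' x x * A x y)) (f : forall x y, M x y -> M' x y) :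
  descent_morph sigma sigma' f -> hopfmod_morph (rho_of sigma) (rho_of sigma') f.
Proof.
case=> Hf Hd; split=> // x y m.
apply: E_trans (Phi_wd (Hd x y m)) _.
rewrite Phi_morph //; exact: E_refl.
Qed.
End Part12.

Section Gal.
Variables (k : comPzRingType) (X : Type) (H : semiHopf k X) (A : comodcat H).
Hypothesis Hg : is_galois A.

Local Notation AR := (Areg A).

Lemma can_inj z x y (s t : seq (A z x * A x y)) :
  tensk_eq (Phi (M := AR) s) (Phi (M := AR) t) -> tensB (M := AR) s t.
Proof. exact: (proj1 (Hg z x y) s t). Qed.

Definition gam x y (h : H x y) : seq (A y x * A x y) :=
  proj1_sig (constructive_indefinite_description _ (proj2 (Hg y x y) [:: (idm A y, h)])).

Lemma gamP x y (h : H x y) : tensk_eq (Phi (M := AR) (gam h)) [:: (idm A y, h)].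
Proof. exact: (proj2_sig (constructive_indefinite_description _ (proj2 (Hg y x y) _))). Qed.

Definition lmul (M : rmod A) w z x y (n : M w z) (s : seq (A z x * A x y)) :
  seq (M w x * A x y) := map (fun p => (act M n p.1, p.2)) s.

Lemma lmul_wd (M : rmod A) w z x y (n : M w z) (s t : seq (A z x * A x y)) :
  tensB (M := AR) s t -> tensB (M := M) (lmul n s) (lmul n t).
Proof.
move=> Hst; rewrite /lmul -!flat_unit; move: s t Hst; apply: t2map; split.
- by move=> a a' b /=; rewrite actDr; apply: fs_gen; apply: t2_addl.
- by move=> a b b' /=; apply: fs_gen; apply: t2_addr.
- split=> [b|a] /=; last by apply: fs_gen; apply: t2_zeror.
  by rewrite act0r; apply: fs_gen; apply: t2_zerol.
- by move=> c a b /=; rewrite actZr; apply: fs_gen; apply: t2_scal.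
- by move=> b a a' Hb /=; rewrite -actA; apply: fs_gen; apply: t2_bal.
Qed.

Lemma Phi_lmul (M : rmod A) w z x y (n : M w z) (s : seq (A z x * A x y)) :
  Phi (lmul n s) = map (fun p => (act M n p.1, p.2)) (Phi (M := AR) s).
Proof.
rewrite /Phi /lmul flat_map map_flat; apply: eq_flat => p /=.
by rewrite -map_comp; apply: eq_map => q /=; rewrite actA.
Qed.

Lemma gamD x y (h h' : H x y) : tensB (M := AR) (gam (h + h')) (gam h ++ gam h').
Proof.
apply: can_inj; apply: E_trans (gamP _) _; rewrite /Phi flat_cat -!/(Phi _).
apply: E_trans (tk_addr _ _ _) _; rewrite -cat1s.
by apply: E_cat; apply: E_sym; apply: gamP.
Qed.

Lemma gam0 x y : tensB (M := AR) (gam (0 : H x y)) [::].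
Proof.
apply: can_inj; apply: E_trans (gamP _) _; exact: tk_zr.
Qed.

Lemma gamZ x y c (h : H x y) :
  tensB (M := AR) (gam (c *: h)) (map (fun p => (c *: p.1, p.2)) (gam h)).
Proof.
apply: can_inj; apply: E_trans (gamP _) _; rewrite Phi_scal.
apply: E_trans (E_sym (tk_scal _ _ _)) _.
have -> : [:: (c *: idm A y, h)] = map (fun p => (c *: p.1, p.2)) [:: (idm A y, h)] by [].
apply: tk_mapl; last by apply: E_sym; apply: gamP.
by split=> [v v'|c' v]; rewrite ?scalerDr // !scalerA mulrC.
Qed.

Definition Theta (M : rmod A) w x y (t : seq (M w y * H x y)) : seq (M w x * A x y) :=
  flat (fun p => lmul p.1 (gam p.2)) t.

Lemma Theta_wd (M : rmod A) w x y (s t : seq (M w y * H x y)) :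
  tensk_eq s t -> tensB (M := M) (Theta s) (Theta t).
Proof.
apply: t2map; split.
- move=> m m' h; apply: E_map_split => u /=; rewrite actDl; by apply: fs_gen; apply: t2_addl.
- by move=> m h h' /=; rewrite /lmul -map_cat; apply: lmul_wd; apply: gamD.
- split=> [h|m] /=.
    by apply: E_map_nil => u; rewrite act0l; by apply: fs_gen; apply: t2_zerol.
  by have := lmul_wd m (gam0 x y).
- move=> c m h /=; apply: E_trans _ (E_sym (lmul_wd m (gamZ c h))).
  by rewrite /lmul -map_comp; apply: E_eq; apply: eq_map => u /=; rewrite actZl actZr.
- by [].
Qed.

Lemma Phi_Theta (M : rmod A) w x y (t : seq (M w y * H x y)) :
  tensk_eq (Phi (Theta t)) t.
Proof.
rewrite /Theta /Phi flatA -{2}(flat_id t); apply: E_flat_pt' => p.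
rewrite -/(Phi _) Phi_lmul; apply: E_trans (tk_mapl (actr_lin _) (gamP _)) _.
by rewrite /= act1; case: p => ? ?; apply: E_refl.
Qed.

Lemma Theta_Phi_A z x y (s : seq (A z x * A x y)) :
  tensB (M := AR) (Theta (Phi (M := AR) s)) s.
Proof. by apply: can_inj; apply: Phi_Theta. Qed.

Lemma Theta_Phi (M : rmod A) z x y (s : seq (M z x * A x y)) :
  tensB (M := M) (Theta (Phi s)) s.
Proof.
rewrite /Theta /Phi flatA -{2}(flat_id s); apply: E_flat_pt' => p.
have e : flat (fun p0 => lmul p0.1 (gam p0.2))
   (map (fun q => (act M p.1 q.1, q.2)) (crho A p.2)) =
   lmul p.1 (Theta (Phi (M := AR) [:: (idm A x, p.2)])).
  rewrite /Theta /Phi flat1 flat_map /lmul map_flat flat_map; apply: eq_flat => q /=.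
  by rewrite -map_comp; apply: eq_map => u /=; rewrite actA comp1l.
rewrite e; apply: E_trans (lmul_wd p.1 (Theta_Phi_A _)) _.
by rewrite /lmul /= act1; clear e; case: p => ? ?; apply: E_refl.
Qed.

Lemma Phi_inj (M : rmod A) z x y (s t : seq (M z x * A x y)) :
  tensk_eq (Phi s) (Phi t) -> tensB (M := M) s t.
Proof.
move=> h; apply: E_trans (E_sym (Theta_Phi s)) _; apply: E_trans (Theta_Phi t).
exact: Theta_wd.
Qed.

End Gal.

Section Part3.
Variables (k : comPzRingType) (X : Type) (H : semiHopf k X) (A : comodcat H).
Hypothesis Hg : is_galois A.

Lemma part3_inj (M : rmod A) (sigma sigma' : forall x y, M x y -> seq (M x x * A x y)) :
  (forall x y (m : M x y), tensk_eq (rho_of sigma m) (rho_of sigma' m)) ->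
  (forall x y (m : M x y), tensBMA_eq (sigma x y m) (sigma' x y m)).
Proof. by move=> h x y m; apply: (Phi_inj Hg); apply: h. Qed.

Lemma part3_full (M M' : rmod A) (sigma : forall x y, M x y -> seq (M x x * A x y))
  (sigma' : forall x y, M' x y -> seq (M' x x * A x y)) (f : forall x y, M x y -> M' x y) :
  hopfmod_morph (rho_of sigma) (rho_of sigma') f -> descent_morph sigma sigma' f.
Proof.
case=> Hf Hr; split=> // x y m; apply: (Phi_inj Hg).
apply: E_trans (Hr x y m) _; rewrite Phi_morph //; exact: E_refl.
Qed.

Lemma tk_sum (M N : lmodType k) (e : M -> N -> M) :
  (forall n, is_klinear (e^~ n)) ->
  (forall m n n', e m (n + n') = e m n + e m n') -> (forall m, e m 0 = 0) ->
  (forall c m n, e (c *: m) n = e m (c *: n)) ->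
  forall s t : seq (M * N), tensk_eq s t ->
  \sum_(p <- s) e p.1 p.2 = \sum_(p <- t) e p.1 p.2.
Proof.
move=> He1 He2 He0 HeZ; apply: fs_sum => s t;
  case=> [m m' n|m n n'|n|m|c m n|b m n []].
- by rewrite !big_cons big_nil /= !addr0 (proj1 (He1 n) m m').
- by rewrite !big_cons big_nil /= He2 !addr0.
- by rewrite big_cons !big_nil /= (lin0 (He1 n)) addr0.
- by rewrite big_cons !big_nil /= He0 addr0.
- by rewrite !big_cons !big_nil /= HeZ.
Qed.

Section Surj.
Variables (M : rmod A) (rho : forall x y, M x y -> seq (M x y * H x y)).
Hypothesis Hr : is_hopfmod rho.

Definition sig_of x y (m : M x y) : seq (M x x * A x y) := Theta Hg (rho m).

Lemma rho_sig x y (m : M x y) : tensk_eq (rho_of sig_of m) (rho m).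
Proof. exact: Phi_Theta. Qed.

Lemma rhoD x y (m m' : M x y) : tensk_eq (rho (m + m')) (rho m ++ rho m').
Proof. by case: Hr => h _; case: (h x y) => [[h1 _] _ _]; apply: h1. Qed.
Lemma rhoZ x y c (m : M x y) :
  tensk_eq (rho (c *: m)) (map (fun p => (c *: p.1, p.2)) (rho m)).
Proof. by case: Hr => h _; case: (h x y) => [[_ h1] _ _]; apply: h1. Qed.
Lemma rhoH_counit x y (m : M x y) : \sum_(p <- rho m) eps H p.2 *: p.1 = m.
Proof. by case: Hr => h _; case: (h x y). Qed.
Lemma rhoH_coassoc x y (m : M x y) :
  tens3k_eq [seq (q.1, (q.2, p.2)) | p <- rho m, q <- rho p.1]
            [seq (p.1, (q.1, q.2)) | p <- rho m, q <- Delta H p.2].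
Proof. by case: Hr => h _; case: (h x y). Qed.
Lemma rho_actH x y z (m : M x y) (a : A y z) :
  tensk_eq (rho (act M m a)) (Psi (rho m) (crho A a)).
Proof. by case: Hr => _ h; apply: h. Qed.

Lemma sig_D x y (m m' : M x y) :
  tensBMA_eq (sig_of (m + m')) (sig_of m ++ sig_of m').
Proof.
apply: (Phi_inj Hg); apply: E_trans (rho_sig _) _; apply: E_trans (rhoD _ _) _.
rewrite /Phi flat_cat -!/(Phi _); apply: E_cat; apply: E_sym; apply: rho_sig.
Qed.

Lemma scale_lin (V : lmodType k) c : is_klinear (fun v : V => c *: v).
Proof. by split=> [v v'|c' v]; rewrite ?scalerDr // !scalerA mulrC. Qed.

Lemma sig_Z x y c (m : M x y) :
  tensBMA_eq (sig_of (c *: m)) (map (fun p => (c *: p.1, p.2)) (sig_of m)).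
Proof.
apply: (Phi_inj Hg); apply: E_trans (rho_sig _) _; apply: E_trans (rhoZ _ _) _.
rewrite Phi_scal; apply: tk_mapl; first exact: scale_lin.
apply: E_sym; apply: rho_sig.
Qed.

Lemma sig_i x y z (m : M x y) (a : A y z) :
  tensBMA_eq (sig_of (act M m a)) (map (fun p => (p.1, comp A p.2 a)) (sig_of m)).
Proof.
apply: (Phi_inj Hg); apply: E_trans (rho_sig _) _; apply: E_trans (rho_actH _ _) _.
apply: E_trans _ (E_sym (Phi_comp _ _)); apply: Psi_l; apply: E_sym; apply: rho_sig.
Qed.

Lemma sig_iii x y (m : M x y) : \sum_(p <- sig_of m) act M p.1 p.2 = m.
Proof.
rewrite -Phi_counit -[RHS](rhoH_counit m).
apply: (tk_sum (e := fun (n : M x y) (h : H x y) => eps H h *: n)).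
- by move=> h; apply: scale_lin.
- by move=> n h h'; rewrite epsD scalerDl.
- by move=> n; rewrite -(scale0r (0 : H x y)) epsZ mul0r scale0r.
- by move=> c n h; rewrite epsZ scalerA mulrC.
- exact: rho_sig.
Qed.

End Surj.
End Part3.

Section Maps.
Variables (k : comPzRingType) (X : Type) (H : semiHopf k X) (A : comodcat H).
Hypothesis Hg : is_galois A.
Local Notation AR := (Areg A).

(* mixed tensor M_wx (x)_{B_x} A_xy (x) H_xy *)
Definition T3m (M : rmod A) w x y :
  seq (M w x * (A x y * H x y)) -> seq (M w x * (A x y * H x y)) -> Prop :=
  tens3_eq (@coinv k X H A x) (fun m b => act M m b) (fun b a => comp A b a)
           (fun _ : unit => False) (fun h _ => h) (fun _ h => h).

Lemma postH (M : rmod A) w x y (c : H x y) (s t : seq (M w x * A x y)) :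
  tensB (M := M) s t ->
  T3m (map (fun r => (r.1, (r.2, c))) s) (map (fun r => (r.1, (r.2, c))) t).
Proof.
move=> Hst; rewrite -!flat_unit; move: s t Hst; apply: t2map; split.
- by move=> *; apply: t3_E_add1.
- by move=> *; apply: t3_E_add2.
- by split=> *; [apply: t3_E_z1 | apply: t3_E_z2].
- by move=> *; apply: t3_E_s12.
- by move=> b m n Hb; apply: (t3_E_b12 (P1 := @coinv k X H A x)).
Qed.

Lemma embB (M : rmod A) x z y (n : M x x) (b : A x z) (s t : seq (A z x * A x y)) :
  tensB (M := AR) s t ->
  tensBMAA_eq (map (fun p => (n, (comp A b p.1, p.2))) s)
              (map (fun p => (n, (comp A b p.1, p.2))) t).
Proof.
move=> Hst; rewrite -!flat_unit; move: s t Hst; apply: t2map; split.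
- by move=> a a' c /=; rewrite compDr; apply: t3_E_add2.
- by move=> *; apply: t3_E_add3.
- by split=> * /=; [rewrite comp0r; apply: t3_E_z2 | apply: t3_E_z3].
- by move=> c a a' /=; rewrite compZr; apply: t3_E_s23.
- move=> c a a' Hc /=; rewrite compA.
  exact: (t3_E_b23 (P2 := @coinv k X H A x) (ract2 := fun a b => comp A a b)).
Qed.

Lemma lmul3 (M : rmod A) w z x y (n : M w z) (s t : seq (A z x * (A x y * H x y))) :
  T3m (M := AR) s t ->
  T3m (M := M) (map (fun p => (act M n p.1, p.2)) s) (map (fun p => (act M n p.1, p.2)) t).
Proof.
move=> Hst; rewrite -!flat_unit; move: s t Hst; apply: t3map; split.
- split.
  + by move=> a a' b h /=; rewrite actDr; apply: t3_E_add1.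
  + by move=> *; apply: t3_E_add2.
  + by move=> *; apply: t3_E_add3.
- split.
  + by move=> * /=; rewrite act0r; apply: t3_E_z1.
  + by move=> *; apply: t3_E_z2.
  + by move=> *; apply: t3_E_z3.
- by move=> c a b h /=; rewrite actZr; apply: t3_E_s12.
- by move=> *; apply: t3_E_s23.
- split; last by [].
  move=> c a b h Hc /=; rewrite -actA.
  exact: (t3_E_b12 (P1 := @coinv k X H A x) (ract1 := fun m b => act M m b)).
Qed.

Definition Th2 (M : rmod A) w x y (t : seq (M w y * (H x y * H x y))) :
  seq (M w x * (A x y * H x y)) :=
  flat (fun p => map (fun r => (r.1, (r.2, p.2.2))) (lmul p.1 (gam Hg p.2.1))) t.

Lemma Th2_wd (M : rmod A) w x y (s t : seq (M w y * (H x y * H x y))) :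
  tens3k_eq s t -> T3m (Th2 s) (Th2 t).
Proof.
apply: t3map; split.
- split.
  + move=> n n' h h' /=; rewrite /lmul -!map_comp.
    by apply: E_map_split => u /=; rewrite actDl; apply: t3_E_add1.
  + move=> n h h' h'' /=; rewrite -map_cat; apply: postH.
    by rewrite /lmul -map_cat; apply: lmul_wd; apply: gamD.
  + move=> n h h' h'' /=; rewrite /lmul -!map_comp.
    by apply: E_map_split => u /=; apply: t3_E_add3.
- split.
  + move=> h h' /=; rewrite /lmul -!map_comp.
    by apply: E_map_nil => u /=; rewrite act0l; apply: t3_E_z1.
  + move=> n h /=; have := postH h (lmul_wd n (gam0 Hg x y)); by [].
  + move=> n h /=; rewrite /lmul -!map_comp.
    by apply: E_map_nil => u /=; apply: t3_E_z3.
- move=> c n h h' /=; apply: E_trans _ (E_sym (postH h' (lmul_wd n (gamZ Hg c h)))).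
  rewrite /lmul -!map_comp; apply: E_eq; apply: eq_map => u /=.
  by rewrite actZl actZr.
- move=> c n h h' /=; apply: E_trans (postH h' (lmul_wd n (gamZ Hg c h))) _.
  rewrite /lmul -!map_comp; apply: E_map_pt => u /=; rewrite actZr.
  by apply: E_trans (t3_E_s12 _ _ _ _) (t3_E_s23 _ _ _ _).
- by split.
Qed.

Definition Th3 (M : rmod A) x y (t : seq (M x x * (A x y * H x y))) :
  seq (M x x * (A x x * A x y)) :=
  flat (fun p => map (fun u => (p.1, (comp A p.2.1 u.1, u.2))) (gam Hg p.2.2)) t.

Lemma Th3_wd (M : rmod A) x y (s t : seq (M x x * (A x y * H x y))) :
  T3m s t -> tensBMAA_eq (Th3 s) (Th3 t).
Proof.
apply: t3map; split.
- split.
  + by move=> n n' a h /=; apply: E_map_split => u /=; apply: t3_E_add1.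
  + by move=> n a a' h /=; apply: E_map_split => u /=; rewrite compDl; apply: t3_E_add2.
  + by move=> n a h h' /=; rewrite -map_cat; apply: embB; apply: gamD.
- split.
  + by move=> a h /=; apply: E_map_nil => u /=; apply: t3_E_z1.
  + by move=> n h /=; apply: E_map_nil => u /=; rewrite comp0l; apply: t3_E_z2.
  + by move=> n a /=; have := embB n a (gam0 Hg x y).
- by move=> c n a h /=; apply: E_map_pt => u /=; rewrite compZl; apply: t3_E_s12.
- move=> c n a h /=; apply: E_trans _ (E_sym (embB n a (gamZ Hg c h))).
  rewrite -map_comp; apply: E_eq; apply: eq_map => u /=.
  by rewrite compZl compZr.
- split; last by [].
  move=> b n a h Hb /=; apply: E_map_pt => u /=; rewrite -compA.
  exact: (t3_E_b12 (P1 := @coinv k X H A x) (ract1 := fun m b => act M m b)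
                   (lact1 := fun b a => comp A b a)).
Qed.

Definition Ph3 (M : rmod A) x y (s : seq (M x x * (A x x * A x y))) :
  seq (M x x * (A x y * H x y)) :=
  flat (fun p => map (fun q => (p.1, (comp A p.2.1 q.1, q.2))) (crho A p.2.2)) s.

Lemma Th3_Ph3 (M : rmod A) x y (s : seq (M x x * (A x x * A x y))) :
  tensBMAA_eq (Th3 (Ph3 s)) s.
Proof.
rewrite /Th3 /Ph3 flatA -{2}(flat_id s); apply: E_flat_pt' => p.
have e : flat (fun p0 => [seq (p0.1, (comp A p0.2.1 u.1, u.2)) | u <- gam Hg p0.2.2])
   [seq (p.1, (comp A p.2.1 q.1, q.2)) | q <- crho A p.2.2] =
   map (fun r => (p.1, (comp A p.2.1 r.1, r.2))) (Theta Hg (Phi (M := AR) [:: (idm A x, p.2.2)])).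
  rewrite /Theta /Phi flat1 flat_map map_flat flat_map; apply: eq_flat => q /=.
  by rewrite /lmul -!map_comp; apply: eq_map => u /=; rewrite comp1l compA.
rewrite e; apply: E_trans (embB p.1 p.2.1 (Theta_Phi_A Hg _)) _.
by rewrite /= comp1r; clear e; case: p => ? [? ?]; apply: E_refl.
Qed.

Lemma Ph3_inj (M : rmod A) x y (s t : seq (M x x * (A x x * A x y))) :
  T3m (Ph3 s) (Ph3 t) -> tensBMAA_eq s t.
Proof.
move=> h; apply: E_trans (E_sym (Th3_Ph3 s)) _; apply: E_trans (Th3_Ph3 t).
exact: Th3_wd.
Qed.

End Maps.

Section TP.
Variables (k : comPzRingType) (X : Type) (H : semiHopf k X) (A : comodcat H).
Hypothesis Hg : is_galois A.
Local Notation AR := (Areg A).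

Definition Om x y (s : seq (A y x * (A x y * H x y))) : seq (A y y * (H x y * H x y)) :=
  flat (fun p => map (fun q => (comp A p.1 q.1, (q.2, p.2.2))) (crho A p.2.1)) s.

Lemma Th2_Om x y (s : seq (A y x * (A x y * H x y))) : T3m (M := AR) (Th2 Hg (M := AR) (Om s)) s.
Proof.
rewrite /Th2 /Om flatA -{2}(flat_id s); apply: E_flat_pt' => p.
have e : flat (fun p0 => [seq (r.1, (r.2, p0.2.2)) | r <- lmul (M := AR) p0.1 (gam Hg p0.2.1)])
   [seq (comp A p.1 q.1, (q.2, p.2.2)) | q <- crho A p.2.1] =
   map (fun r => (r.1, (r.2, p.2.2))) (lmul (M := AR) p.1 (Theta Hg (Phi (M := AR) [:: (idm A x, p.2.1)]))).
  rewrite /Theta /Phi flat1 flat_map /lmul !map_flat flat_map; apply: eq_flat => q /=.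
  by rewrite -!map_comp; apply: eq_map => u /=; rewrite comp1l compA.
rewrite e; apply: E_trans (postH (M := AR) p.2.2 (lmul_wd (M := AR) p.1 (Theta_Phi_A Hg _))) _.
by rewrite /= comp1r; clear e; case: p => ? [? ?]; apply: E_refl.
Qed.

Lemma Om_inj x y (s t : seq (A y x * (A x y * H x y))) :
  tens3k_eq (Om s) (Om t) -> T3m (M := AR) s t.
Proof.
move=> h; apply: E_trans (E_sym (Th2_Om s)) _; apply: E_trans (Th2_Om t).
exact: Th2_wd.
Qed.

Definition LT x y (h : H x y) : seq (A y x * (A x y * H x y)) :=
  flat (fun d => map (fun u => (u.1, (u.2, d.2))) (gam Hg d.1)) (Delta H h).
Definition RT x y (h : H x y) : seq (A y x * (A x y * H x y)) :=
  flat (fun u => map (fun e => (u.1, (e.1, e.2))) (crho A u.2)) (gam Hg h).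

Lemma TPrime x y (h : H x y) : T3m (M := AR) (LT h) (RT h).
Proof.
apply: Om_inj; apply: (@E_trans _ _ _ (map (fun d => (idm A y, d)) (Delta H h))).
  rewrite /LT /Om flatA -flat_unit; apply: E_flat_pt' => d.
  have e : flat (fun p => [seq (comp A p.1 q.1, (q.2, p.2.2)) | q <- crho A p.2.1])
     [seq (u.1, (u.2, d.2)) | u <- gam Hg d.1] =
     map (fun r => (r.1, (r.2, d.2))) (Phi (M := AR) (gam Hg d.1)).
    by rewrite /Phi flat_map map_flat; apply: eq_flat => u /=; rewrite -map_comp.
  rewrite e; apply: E_trans (tk_T3_post d.2 (gamP Hg d.1)) _.
  by case: d {e} => ? ?; apply: E_refl.
rewrite /RT /Om flatA.
apply: (@E_trans _ _ _ (flat (fun u => map (fun v => (comp A u.1 v.1, v.2)) (Va (crho A u.2)))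
   (gam Hg h))); last first.
  apply: E_flat_pt' => u.
  have -> : [seq (comp A u.1 v.1, v.2) | v <- Va (crho A u.2)] =
    map (fun p => (comp A u.1 p.1, (id p.2.1, id p.2.2))) (Va (crho A u.2)).
    by apply: eq_map => -[? []].
  apply: E_trans (k3_T3 (compr_lin u.1) (lin_id _) (lin_id _) (E_sym (crho_coassoc u.2))) _.
  rewrite map_flat flat_map; apply: E_eq; apply: eq_flat => e /=.
  by rewrite -!map_comp.
have e : flat (fun u => map (fun v => (comp A u.1 v.1, v.2)) (Va (crho A u.2))) (gam Hg h) =
   Va (Phi (M := AR) (gam Hg h)).
  rewrite /Va /Phi flatA; apply: eq_flat => u /=.
  by rewrite map_flat flat_map; apply: eq_flat => q /=; rewrite -map_comp.
rewrite e; apply: E_sym; apply: E_trans (Va_wd (gamP Hg h)) _.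
rewrite /Va flat1; exact: E_refl.
Qed.

End TP.

Section Sii.
Variables (k : comPzRingType) (X : Type) (H : semiHopf k X) (A : comodcat H).
Hypothesis Hg : is_galois A.
Local Notation AR := (Areg A).
Variables (M : rmod A) (rho : forall x y, M x y -> seq (M x y * H x y)).
Hypothesis Hr : is_hopfmod rho.
Local Notation sig := (sig_of Hg rho).

Lemma sig0 x y : tensBMA_eq (sig (0 : M x y)) [::].
Proof.
apply: (Phi_inj Hg); apply: E_trans (rho_sig Hg rho _) _.
have hl : is_klinear_tk (@rho x y) by case: Hr => h _; case: (h x y).
exact: tk_lin0 hl.
Qed.

Definition Smap x y (p : M x y * H x y) : seq (M x x * (A x y * H x y)) :=
  map (fun r => (r.1, (r.2, p.2))) (sig p.1).

Lemma S_wd x y (s t : seq (M x y * H x y)) : tensk_eq s t -> T3m (flat (@Smap x y) s) (flat (@Smap x y) t).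
Proof.
apply: t2map; split.
- by move=> n n' h; rewrite /Smap /= -map_cat; apply: postH; apply: sig_D.
- by move=> n h h'; rewrite /Smap /=; apply: E_map_split => r; apply: t3_E_add3.
- split=> [h|n]; rewrite /Smap /=.
    by have := postH h (sig0 x y).
  by apply: E_map_nil => r; apply: t3_E_z3.
- move=> c n h; rewrite /Smap /=; apply: E_trans (postH h (sig_Z Hg Hr c n)) _.
  rewrite -map_comp; apply: E_map_pt => r /=.
  by apply: E_trans (t3_E_s12 _ _ _ _) (t3_E_s23 _ _ _ _).
- by [].
Qed.

Lemma sig_ii x y (m : M x y) :
  tensBMAA_eq [seq (q.1, (q.2, p.2)) | p <- sig m, q <- sig p.1]
              [seq (p.1, (idm A x, p.2)) | p <- sig m].
Proof.
apply: (Ph3_inj Hg).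
pose FL := flat (fun r => map (fun p => (act M r.1 p.1, p.2)) (LT Hg r.2)) (rho m).
pose FR := flat (fun r => map (fun p => (act M r.1 p.1, p.2)) (RT Hg r.2)) (rho m).
have eR : Ph3 [seq (p.1, (idm A x, p.2)) | p <- sig m] = FR.
  rewrite /Ph3 flat_map /FR /sig_of /Theta flatA; apply: eq_flat => r /=.
  rewrite /RT /lmul flat_map map_flat; apply: eq_flat => u /=.
  by rewrite -!map_comp; apply: eq_map => e /=; rewrite comp1l.
have eLR : T3m FL FR.
  apply: E_flat_pt' => r; exact: lmul3 (TPrime Hg r.2).
rewrite eR; apply: (E_trans _ eLR).
apply: (@E_trans _ _ _ (flat (@Smap x y) (Phi (sig m)))).
  rewrite /Ph3 flat_comprE flatA /Phi flatA; apply: E_flat_pt' => p.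
  rewrite !flat_map.
  have -> : flat (fun q => [seq ((q.1, (q.2, p.2)).1, (comp A (q.1, (q.2, p.2)).2.1 q0.1, q0.2))
               | q0 <- crho A (q.1, (q.2, p.2)).2.2]) (sig p.1) =
            flat (fun q => flat (fun e => [:: (q.1, (comp A q.2 e.1, e.2))]) (crho A p.2)) (sig p.1).
    by apply: eq_flat => q; rewrite flat_unit.
  apply: E_trans (E_swapl _ _ _) _; apply: E_flat_pt' => e.
  rewrite /Smap /=; apply: E_trans _ (postH e.2 (E_sym (sig_i Hg Hr p.1 e.1))).
  by rewrite -map_comp flat_unit; apply: E_refl.
apply: E_trans (S_wd (rho_sig Hg rho m)) _.
apply: (@E_trans _ _ _ (Th2 Hg [seq (q.1, (q.2, p.2)) | p <- rho m, q <- rho p.1])).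
  apply: E_eq; rewrite /Th2 flat_comprE flatA; apply: eq_flat => r.
  rewrite /Smap /sig_of /Theta flat_map map_flat; apply: eq_flat => w /=.
  by rewrite -map_comp.
apply: E_trans (Th2_wd Hg (rhoH_coassoc Hr m)) _.
apply: E_eq; rewrite /Th2 /FL flat_comprE flatA; apply: eq_flat => r.
rewrite /LT flat_map map_flat; apply: eq_flat => d /=.
by rewrite /lmul -!map_comp.
Qed.
End Sii.

Close Scope ring_scope.
Unset Implicit Arguments.

Theorem theorem3p9 (k : comPzRingType) (X : Type) (H : semiHopf k X) (A : comodcat H) :
  (forall (M : rmod A) (sigma : forall x y, M x y -> seq (M x x * A x y)),
      is_descent sigma -> is_hopfmod (rho_of sigma)) /\
  (forall (M M' : rmod A) (sigma : forall x y, M x y -> seq (M x x * A x y))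
          (sigma' : forall x y, M' x y -> seq (M' x x * A x y))
          (f : forall x y, M x y -> M' x y),
      is_descent sigma -> is_descent sigma' -> descent_morph sigma sigma' f ->
      hopfmod_morph (rho_of sigma) (rho_of sigma') f) /\
  (is_hopf_cat H -> is_galois A ->
    [/\ forall (M : rmod A) (rho : forall x y, M x y -> seq (M x y * H x y)),
          is_hopfmod rho ->
          exists sigma : forall x y, M x y -> seq (M x x * A x y),
            is_descent sigma /\
            (forall x y (m : M x y), tensk_eq (rho_of sigma m) (rho x y m)),
        forall (M : rmod A) (sigma sigma' : forall x y, M x y -> seq (M x x * A x y)),
          is_descent sigma -> is_descent sigma' ->
          (forall x y (m : M x y), tensk_eq (rho_of sigma m) (rho_of sigma' m)) ->
          (forall x y (m : M x y), tensBMA_eq (sigma x y m) (sigma' x y m)) &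
        forall (M M' : rmod A) (sigma : forall x y, M x y -> seq (M x x * A x y))
          (sigma' : forall x y, M' x y -> seq (M' x x * A x y))
          (f : forall x y, M x y -> M' x y),
          is_descent sigma -> is_descent sigma' ->
          hopfmod_morph (rho_of sigma) (rho_of sigma') f ->
          descent_morph sigma sigma' f]).
Proof.
split; first by move=> M sigma Hs; apply: part1.
split; first by move=> M M' sigma sigma' f _ _ Hf; apply: part2.
move=> _ Hg; split.
- move=> M rho Hr; exists (sig_of Hg rho); split; last by move=> x y m; apply: rho_sig.
  split.
  + by move=> x y m m'; apply: sig_D.
  + by move=> x y c m; apply: sig_Z.
  + by move=> x y z m a; apply: sig_i.
  + by move=> x y m; apply: sig_ii.
  + by move=> x y m; apply: sig_iii.
- by move=> M sigma sigma' _ _; apply: part3_inj.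
- by move=> M M' sigma sigma' f _ _; apply: part3_full.
Qed.
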